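(* Let $W=W(v_0;v_1,\dots,v_k)$ be a $k$-wheel and $T$ a coupled tree of $W$. Then at least one of the following holds: (a) for all $i\in[1,k]$, $v_0v_i\in T$ if and only if $v_iv_{i+1}\in\bar T$; or (b) for all $i\in[1,k]$, $v_0v_i\in T$ if and only if $v_{i-1}v_i\in\bar T$.
   Context: For $k\ge 3$ and distinct vertices $v_0,\dots,v_k$, the $k$-wheel $W=W(v_0;v_1,\dots,v_k)$ is the graph whose edges are the radii $v_0v_i$ ($1\le i\le k$) and the chords $v_iv_{i+1}$ ($1\le i\le k$); spoke indices are read cyclically in $[1,k]$ (so $v_{k+1}=v_1$, $v_{1-1}=v_k$). A coupled tree of $W$ is a spanning tree $T\subseteq E(W)$ of $V(W)$ such that $\bar T=E(W)\setminus T$ is also a spanning tree of $V(W)$. *)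

(* Defs.v *)
From mathcomp Require Import all_boot.
Set Implicit Arguments. Unset Strict Implicit. Unset Printing Implicit Defensive.

(* The k-wheel W(v_0; v_1, ..., v_k) on the vertex type 'I_k.+1:
   v_i is the ordinal with value i (v_0 is the hub). Edges are 2-element
   vertex sets. *)
Definition wv (k i : nat) : 'I_k.+1 := inord i.

Definition wnext (k i : nat) : nat := if i == k then 1 else i.+1.
Definition wprev (k i : nat) : nat := if i == 1 then k else i.-1.

Definition edge (V : finType) (x y : V) : {set V} := [set x; y].

Definition wheel_edges (k : nat) : {set {set 'I_k.+1}} :=
  [set edge (wv k 0) (wv k i.+1) | i : 'I_k] :|:
  [set edge (wv k i.+1) (wv k (wnext k i.+1)) | i : 'I_k].

Definition adj (V : finType) (F : {set {set V}}) : rel V :=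
  fun x y => (x != y) && (edge x y \in F).

Definition connected_graph (V : finType) (F : {set {set V}}) : Prop :=
  forall x y : V, connect (adj F) x y.

Definition has_cycle (V : finType) (F : {set {set V}}) : Prop :=
  exists s : seq V, [/\ 3 <= size s, uniq s & cycle (adj F) s].

Definition spanning_tree (V : finType) (F : {set {set V}}) : Prop :=
  connected_graph F /\ ~ has_cycle F.

Definition coupled_tree (k : nat) (T : {set {set 'I_k.+1}}) : Prop :=
  [/\ T \subset wheel_edges k, spanning_tree T
    & spanning_tree (wheel_edges k :\: T)].

(* Main.v *)
Require Import Defs.
From mathcomp Require Import all_boot zify.
Set Implicit Arguments. Unset Strict Implicit. Unset Printing Implicit Defensive.

Definition pos (k j : nat) : 'I_k.+1 := inord (j %% k).+1.
Definition Sp k (F : {set {set 'I_k.+1}}) j := edge (wv k 0) (pos k j) \in F.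
Definition Ch k (F : {set {set 'I_k.+1}}) j := edge (pos k j) (pos k j.+1) \in F.

Lemma pos_val k j : 0 < k -> val (pos k j) = (j %% k).+1.
Proof. by move=> hk; rewrite /pos /= inordK // ltnS ltn_pmod. Qed.

Lemma hub_val k : val (wv k 0) = 0.
Proof. by rewrite /wv /= inordK. Qed.

Lemma pos_hub k j : 0 < k -> (pos k j == wv k 0) = false.
Proof. by move=> hk; apply/negbTE; rewrite -val_eqE /= pos_val // hub_val. Qed.

Lemma pos_eq k i j : 0 < k -> (pos k i == pos k j) = (i == j %[mod k]).
Proof. by move=> hk; rewrite -val_eqE /= !pos_val. Qed.

Lemma pos_congr k i j : i = j %[mod k] -> pos k i = pos k j.
Proof. by rewrite /pos => ->. Qed.

Lemma modS_eq k m n : (m.+1 == n.+1 %[mod k]) = (m == n %[mod k]).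
Proof. by rewrite -(addn1 m) -(addn1 n) eqn_modDr. Qed.

Lemma edge_sym (V : finType) (x y : V) : edge x y = edge y x.
Proof. by rewrite /edge setUC. Qed.

Lemma edge_eq (V : finType) (x y a b : V) : edge x y = edge a b ->
  (x == a) && (y == b) || (x == b) && (y == a).
Proof.
move=> E.
have hx : x \in edge a b by rewrite -E /edge set21.
have hy : y \in edge a b by rewrite -E /edge set22.
have ha : a \in edge x y by rewrite E /edge set21.
have hb : b \in edge x y by rewrite E /edge set22.
rewrite /edge !inE in hx hy ha hb.
case/orP: hx => /eqP ?; case/orP: hy => /eqP ?; subst; rewrite ?eqxx //=.
- by case/orP: hb => /eqP ->; rewrite eqxx.
- by rewrite orbT.
- by case/orP: ha => /eqP ->; rewrite eqxx ?orbT.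
Qed.

Lemma wv_pos k i : i < k -> wv k i.+1 = pos k i.
Proof. by move=> hi; rewrite /wv /pos modn_small. Qed.

Lemma wv_next k i : i < k -> wv k (wnext k i.+1) = pos k i.+1.
Proof.
move=> hi; rewrite /wnext /wv /pos.
case: eqP => [E|ne].
  by have -> : (i.+1 %% k) = 0 by rewrite E modnn.
rewrite modn_small //.
by rewrite ltn_neqAle hi andbT; apply/eqP.
Qed.

Lemma pos_mod k j : pos k (j %% k) = pos k j.
Proof. by apply: pos_congr; rewrite modn_mod. Qed.

Lemma posS_mod k j : pos k (j %% k).+1 = pos k j.+1.
Proof. by apply/pos_congr/eqP; rewrite modS_eq modn_mod. Qed.

Lemma W_char k e : 0 < k -> e \in wheel_edges k -> exists j,
  e = edge (wv k 0) (pos k j) \/ e = edge (pos k j) (pos k j.+1).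
Proof.
move=> hk; rewrite /wheel_edges inE => /orP [] /imsetP [i _ ->]; exists i.
- by left; rewrite wv_pos.
- by right; rewrite wv_pos // wv_next.
Qed.

Lemma spoke_W k j : 0 < k -> edge (wv k 0) (pos k j) \in wheel_edges k.
Proof.
move=> hk; rewrite /wheel_edges inE; apply/orP; left.
by apply/imsetP; exists (Ordinal (ltn_pmod j hk)).
Qed.

Lemma chord_W k j : 0 < k -> edge (pos k j) (pos k j.+1) \in wheel_edges k.
Proof.
move=> hk; rewrite /wheel_edges inE; apply/orP; right.
apply/imsetP; exists (Ordinal (ltn_pmod j hk)) => //=.
by rewrite wv_pos ?ltn_pmod // wv_next ?ltn_pmod // pos_mod posS_mod.
Qed.

Lemma adj_spoke k F j : 0 < k -> adj F (wv k 0) (pos k j) = Sp F j.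
Proof. by move=> hk; rewrite /adj eq_sym pos_hub. Qed.

Lemma adj_spoke' k F j : 0 < k -> adj F (pos k j) (wv k 0) = Sp F j.
Proof. by move=> hk; rewrite /adj pos_hub // edge_sym. Qed.

Lemma adj_chord k F j : 2 < k -> adj F (pos k j) (pos k j.+1) = Ch F j.
Proof.
move=> hk; rewrite /adj pos_eq ?(ltn_trans _ hk) //.
rewrite -[in X in X == _](addn0 j) -addn1 eqn_modDl mod0n modn_small //.
  by rewrite addn1.
by apply: ltnW.
Qed.

Lemma Sp_congr k (F : {set {set 'I_k.+1}}) i j : i = j %[mod k] -> Sp F i = Sp F j.
Proof. by move=> h; rewrite /Sp (pos_congr h). Qed.

Lemma Ch_congr k (F : {set {set 'I_k.+1}}) i j : i = j %[mod k] -> Ch F i = Ch F j.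
Proof.
move=> h; rewrite /Ch (pos_congr h).
by rewrite (@pos_congr k i.+1 j.+1) //; apply/eqP; rewrite modS_eq h.
Qed.

Lemma predS_mod k a : 0 < k -> (a + k.-1).+1 = a %[mod k].
Proof. by move=> k0; rewrite -addnS prednK // modnDr. Qed.

Lemma disc k (F : {set {set 'I_k.+1}}) a L : 2 < k -> F \subset wheel_edges k -> connected_graph F -> L < k ->
  ~~ Ch F (a + k.-1) -> ~~ Ch F (a + L) -> (forall t, t <= L -> ~~ Sp F (a + t)) -> False.
Proof.
move=> hk hFW hc hL hp hn hs.
have k0 : 0 < k by apply: leq_trans hk.
pose inA (y : 'I_k.+1) := [exists t : 'I_L.+1, y == pos k (a + t)].
have cl : forall x y, adj F x y -> inA x -> inA y.
  move=> x y /andP [nxy exy] /existsP [t /eqP xe].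
  have tL : t <= L by rewrite -ltnS.
  have [j [ej|ej]] := W_char k0 (subsetP hFW _ exy).
  - case/orP: (edge_eq ej) => /andP [/eqP ex /eqP ey].
    + by move: ex; rewrite xe => /eqP; rewrite pos_hub.
    + by move: (hs _ tL); rewrite /Sp -xe -ey edge_sym exy.
  - case/orP: (edge_eq ej) => /andP [/eqP ex /eqP ey].
    + have jc : j = a + t %[mod k] by apply/eqP; rewrite -pos_eq // -ex xe.
      case: (ltngtP t L) => [tlt|tgt|teq].
      * apply/existsP; exists (Ordinal (tlt : (t.+1 < L.+1))) => /=.
        rewrite ey; apply/eqP/pos_congr; rewrite addnS; apply/eqP.
        by rewrite modS_eq; apply/eqP.
      * by move: tgt; rewrite ltnNge tL.
      * exfalso; move: hn; rewrite -teq /Ch.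
        have e1 : pos k (a + t) = x by rewrite xe.
        have e2 : pos k (a + t).+1 = y.
          by rewrite ey; apply/pos_congr/eqP; rewrite modS_eq; apply/eqP.
        by rewrite e1 e2 exy.
    + have jc : j.+1 = a + t %[mod k] by apply/eqP; rewrite -pos_eq // -ex xe.
      case: (posnP t) => [t0|tp].
      * exfalso; move: hp; rewrite /Ch.
        have e1 : pos k (a + k.-1) = y.
          rewrite ey; apply/pos_congr/eqP; rewrite -modS_eq predS_mod //.
          by rewrite jc t0 addn0.
        have e2 : pos k (a + k.-1).+1 = x.
          by rewrite ex; apply/pos_congr; rewrite predS_mod // jc t0 addn0.
        by rewrite e1 e2 edge_sym exy.
      * apply/existsP.
        exists (Ordinal (leq_ltn_trans (leq_pred t) (ltn_ord t))) => /=.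
        rewrite ey; apply/eqP/pos_congr/eqP.
        by rewrite -modS_eq -addnS prednK // jc.
have gen : forall p x, path (adj F) x p -> inA x -> inA (last x p).
  by elim=> [|z p IH] x //= /andP [hxz hq] hx; apply: IH hq (cl _ _ hxz hx).
have /connectP [p pth lst] := hc (pos k a) (wv k 0).
have := gen p _ pth; rewrite -lst.
have /[swap] /[apply] : inA (pos k a).
  by apply/existsP; exists ord0; rewrite addn0.
by case/existsP => t; rewrite eq_sym pos_hub.
Qed.

Lemma path_rim k (F : {set {set 'I_k.+1}}) a L : 2 < k -> (forall t, t < L -> Ch F (a + t)) ->
  path (adj F) (pos k a) [seq pos k t | t <- iota a.+1 L].
Proof.
move=> hk; elim: L a => [|L IH] a H //=.
rewrite adj_chord // -[a.+1]addn1 -(addn0 a) H // /=.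
rewrite addn0 addn1; apply: IH => t tL.
by rewrite addSnnS; apply: H.
Qed.

Lemma last_rim k a L : last (pos k a) [seq pos k t | t <- iota a.+1 L] = pos k (a + L).
Proof.
elim: L a => [|L IH] a /=; first by rewrite addn0.
by rewrite IH addSnnS.
Qed.

Lemma uniq_rim k a n : 0 < k -> n <= k -> uniq [seq pos k t | t <- iota a n].
Proof.
move=> k0 nk; rewrite map_inj_in_uniq ?iota_uniq // => t u.
rewrite !mem_iota => /andP [aT tn] /andP [aU un] /eqP.
rewrite pos_eq // -(subnKC aT) -(subnKC aU) eqn_modDl.
rewrite !modn_small; first by move/eqP => ->.
- by rewrite ltn_subLR //; apply: leq_trans un _; rewrite leq_add2l.
- by rewrite ltn_subLR //; apply: leq_trans tn _; rewrite leq_add2l.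
Qed.

Lemma cyc k (F : {set {set 'I_k.+1}}) a L : 2 < k -> ~ has_cycle F -> 0 < L -> L < k ->
  (forall t, t < L -> Ch F (a + t)) -> Sp F a -> Sp F (a + L) -> False.
Proof.
move=> hk hnc L0 Lk hC hSa hSb.
have k0 : 0 < k by apply: leq_trans hk.
apply: hnc; exists (wv k 0 :: [seq pos k t | t <- iota a L.+1]); split.
- by rewrite /= size_map size_iota ltnS.
- rewrite cons_uniq uniq_rim // andbT.
  by apply/mapP => -[t _ /eqP]; rewrite eq_sym pos_hub.
- rewrite /cycle rcons_path /= adj_spoke // hSa /= path_rim //=.
  by rewrite last_rim adj_spoke'.
Qed.

Lemma rim k (F : {set {set 'I_k.+1}}) : 2 < k -> ~ has_cycle F -> (forall t, t < k -> Ch F t) -> False.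
Proof.
move=> hk hnc hC.
have k0 : 0 < k by apply: leq_trans hk.
apply: hnc; exists [seq pos k t | t <- iota 0 k]; split.
- by rewrite size_map size_iota.
- by rewrite uniq_rim.
- have -> : iota 0 k = 0 :: iota 1 k.-1 by rewrite -{1}(prednK k0).
  rewrite /= /cycle rcons_path path_rim //=; last first.
    by move=> t tk; apply: hC; rewrite add0n (leq_trans tk) // leq_pred.
  rewrite last_rim add0n.
  have -> : pos k 0 = pos k (k.-1).+1.
    by apply: pos_congr; rewrite prednK // modnn mod0n.
  rewrite adj_chord //; apply: hC; rewrite prednK //.
Qed.

Lemma ar1 a t k : 0 < k -> a + t.+1 + k.-1 = a + t + k. Proof. lia. Qed.
Lemma ar2 a L k : 0 < k -> 0 < L -> a + L + k.-1 = a + L.-1 + k. Proof. lia. Qed.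
Lemma shift a0 j k : a0 < k -> j < k -> exists t, t < k /\ a0 + t = j %[mod k].
Proof.
move=> ha hj; case: (leqP a0 j) => h.
- by exists (j - a0); split; [lia | rewrite subnKC].
- exists (j + k - a0); split; first lia.
  have -> : a0 + (j + k - a0) = j + k by lia.
  by rewrite modnDr.
Qed.

Definition xx k (F : {set {set 'I_k.+1}}) j := Sp F j == ~~ Ch F j.
Definition yy k (F : {set {set 'I_k.+1}}) j := Sp F j == ~~ Ch F (j + k.-1).
Definition bnd k (F : {set {set 'I_k.+1}}) j := Ch F (j + k.-1) != Ch F j.

Definition good k (F G : {set {set 'I_k.+1}}) :=
  [/\ F \subset wheel_edges k, G \subset wheel_edges k, spanning_tree F &
      spanning_tree G] /\ ((forall j, Sp G j = ~~ Sp F j) /\ (forall j, Ch G j = ~~ Ch F j)).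

Lemma good_sym k (F G : {set {set 'I_k.+1}}) : good F G -> good G F.
Proof.
case=> [[h1 h2 h3 h4] [h5 h6]]; split; first by split.
by split=> j; rewrite ?h5 ?h6 negbK.
Qed.

Lemma bnd_good k (F G : {set {set 'I_k.+1}}) j : good F G -> bnd G j = bnd F j.
Proof. by case=> _ [_ h]; rewrite /bnd !h; case: (Ch F _); case: (Ch F _). Qed.

Lemma xx_good k (F G : {set {set 'I_k.+1}}) j : good F G -> xx G j = xx F j.
Proof. by case=> _ [h' h]; rewrite /xx h h'; case: (Ch F _); case: (Sp F _). Qed.

Lemma disc1 k (F : {set {set 'I_k.+1}}) j : 2 < k -> F \subset wheel_edges k ->
  connected_graph F -> ~~ Ch F (j + k.-1) -> ~~ Ch F j -> ~~ Sp F j -> False.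
Proof.
move=> hk hW hc h1 h2 h3; apply: (disc (a:=j) (L:=0) hk hW hc) => //.
- by apply: leq_trans hk.
- by rewrite addn0.
- by move=> t; rewrite leqn0 => /eqP ->; rewrite addn0.
Qed.

Lemma nb k (F G : {set {set 'I_k.+1}}) j : 2 < k -> good F G -> ~~ bnd F j ->
  xx F j && yy F j.
Proof.
move=> hk gd; have [[hFW hGW [cF _] [cG _]] [hS hC]] := gd.
rewrite /bnd negbK => /eqP e; rewrite /xx /yy e.
case hc: (Ch F j).
- case hs: (Sp F j) => //; exfalso.
  apply: (disc1 (j:=j) hk hGW cG); rewrite ?hC ?hS ?e ?hc ?hs //.
- case hs: (Sp F j) => //; exfalso.
  by apply: (disc1 (j:=j) hk hFW cF); rewrite ?e ?hc ?hs.
Qed.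

Lemma run1 k (F G : {set {set 'I_k.+1}}) a L : 2 < k -> good F G -> 0 < L -> L < k ->
  bnd F a -> bnd F (a + L) -> (forall u, 0 < u < L -> ~~ bnd F (a + u)) ->
  Ch F a -> xx F a = xx F (a + L).
Proof.
move=> hk gd L0 Lk ba bb hin ca; have [[hFW hGW [cF aF] [cG _]] [hS hC]] := gd.
have k0 : 0 < k by apply: leq_trans hk.
have hcong : forall t, t < L -> Ch F (a + t).
  elim=> [|t IH] ht; first by rewrite addn0.
  have /hin : 0 < t.+1 < L by rewrite ht.
  rewrite /bnd negbK => /eqP <-.
  rewrite (@Ch_congr _ _ _ (a + t)) ?IH ?(ltnW ht) //.
  by rewrite ar1 // modnDr.
have cprev : forall u, 0 < u -> u <= L -> Ch F (a + u + k.-1).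
  move=> u u0 uL; rewrite (@Ch_congr _ _ _ (a + u.-1)) ?hcong //.
    by rewrite -ltnS prednK.
  by rewrite ar2 // modnDr.
have cb : Ch F (a + L) = false.
  by move: bb; rewrite /bnd cprev //; case: (Ch F _).
have cpa : Ch F (a + k.-1) = false by move: ba; rewrite /bnd ca; case: (Ch F _).
have sin : forall u, 0 < u < L -> Sp F (a + u) = false.
  move=> u /andP [u0 uL]; apply/negP => hs.
  apply: (disc1 (j:=a + u) hk hGW cG); rewrite ?hC ?hS ?negbK ?hs //.
    by apply: cprev => //; apply: ltnW.
  by apply: hcong.
rewrite /xx ca cb.
case sa: (Sp F a); case sb: (Sp F (a + L)) => //; exfalso.
- by apply: (cyc hk aF L0 Lk hcong) => //.
- apply: (disc (a:=a) hk hFW cF Lk); first by rewrite cpa.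
  + by rewrite cb.
  + move=> t tL; case: (posnP t) => [->|t0]; first by rewrite addn0 sa.
    case: (ltngtP t L) => [tl|tg|->]; last by rewrite sb.
    * by rewrite sin // t0.
    * by move: tg; rewrite ltnNge tL.
Qed.

Lemma run k (F G : {set {set 'I_k.+1}}) a L : 2 < k -> good F G -> 0 < L -> L < k ->
  bnd F a -> bnd F (a + L) -> (forall u, 0 < u < L -> ~~ bnd F (a + u)) ->
  xx F a = xx F (a + L).
Proof.
move=> hk gd L0 Lk ba bb hin.
case ca: (Ch F a); first exact: (run1 hk gd).
have gd' := good_sym gd.
rewrite -!(xx_good _ gd); apply: (run1 hk gd') => //; rewrite ?(bnd_good _ gd) //.
- by move=> u hu; rewrite (bnd_good _ gd) hin.
- by case: gd => _ [_ ->]; rewrite ca.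
Qed.

Lemma ar3 j k : 0 < k -> j.+1 + k.-1 = j + k. Proof. lia. Qed.

Lemma yy_bnd k (F : {set {set 'I_k.+1}}) j : bnd F j -> yy F j = ~~ xx F j.
Proof.
by rewrite /bnd /yy /xx; case: (Sp F j); case: (Ch F j); case: (Ch F (j + k.-1)).
Qed.

Lemma wv_prev k j : 0 < k -> j < k -> wv k (wprev k j.+1) = pos k (j + k.-1).
Proof.
move=> k0; case: j => [|j] hj.
- have h : k.-1 < k by rewrite ltn_predL.
  by rewrite /wprev /= add0n -(wv_pos h) prednK.
- rewrite /wprev /= wv_pos ?(ltnW hj) //; apply: pos_congr.
  by rewrite ar3 // modnDr.
Qed.

Theorem lemma3p2 (k : nat) (hk : 3 <= k) (T : {set {set 'I_k.+1}}) :
  coupled_tree T ->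
  (forall i, 1 <= i <= k ->
     (edge (wv k 0) (wv k i) \in T <->
      edge (wv k i) (wv k (wnext k i)) \in wheel_edges k :\: T)) \/
  (forall i, 1 <= i <= k ->
     (edge (wv k 0) (wv k i) \in T <->
      edge (wv k (wprev k i)) (wv k i) \in wheel_edges k :\: T)).
Proof.
move=> [hTW tT tG].
have k0 : 0 < k by apply: leq_trans hk.
set G := wheel_edges k :\: T.
have gd : good T G.
  split; first by split => //; apply: subsetDl.
  by split=> j; rewrite /Sp /Ch /G inE ?spoke_W ?chord_W // andbT.
have [[_ _ [cT aT] [cG aG]] [hS hC]] := gd.
have [a0 [a0k ba0]] : exists a0, a0 < k /\ bnd T a0.
  case: (pickP (fun i : 'I_k => bnd T i)) => [i bi | none]; first by exists i.
  exfalso.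
  have cst : forall j, j < k -> Ch T j = Ch T 0.
    elim=> [|j IH] hj //.
    have := none (Ordinal hj); rewrite /bnd /= => /negbFE/eqP <-.
    by rewrite (@Ch_congr _ _ _ j) ?IH ?(ltnW hj) // ar3 // modnDr.
  case c0: (Ch T 0).
  - by apply: (rim hk aT) => t tk; rewrite cst // c0.
  - by apply: (rim hk aG) => t tk; rewrite hC cst // c0.
have inv : forall t, t < k -> exists b, [/\ b <= t, bnd T (a0 + b),
    xx T (a0 + b) = xx T a0 & forall u, b < u <= t -> ~~ bnd T (a0 + u)].
  elim=> [|t IH] ht.
    exists 0; rewrite addn0; split => // u /andP [u0 u1].
    by move: (leq_trans u0 u1).
  have [b [bt bb xb hb]] := IH (ltnW ht).
  case bt1: (bnd T (a0 + t.+1)).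
  - exists t.+1; split => //.
    + rewrite -xb.
      have e : a0 + t.+1 = a0 + b + (t.+1 - b).
        by rewrite -addnA subnKC // (leq_trans bt).
      rewrite e; symmetry; apply: (run hk gd) => //.
      * by rewrite subn_gt0 ltnS.
      * by rewrite (leq_ltn_trans (leq_subr _ _) ht).
      * by rewrite -e.
      * move=> u /andP [u0 uL]; rewrite -addnA; apply: hb.
        rewrite -{1}(addn0 b) ltn_add2l u0 /=.
        by rewrite -ltnS -ltn_subRL.
    + by move=> u /andP [u1 u2]; move: (leq_trans u1 u2); rewrite ltnn.
  - exists b; split => //; first by apply: leq_trans bt _.
    move=> u /andP [bu ut].
    rewrite leq_eqVlt in ut; case/orP: ut => [/eqP ->|ut]; first by rewrite bt1.
    by apply: hb; rewrite bu.
have claim : forall t, t < k -> bnd T (a0 + t) -> xx T (a0 + t) = xx T a0.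
  move=> t tk bt; have [b [bt' bb xb hb]] := inv t tk.
  case: (ltngtP b t) => [lt|gt|<-] //.
  - by move: (hb t); rewrite lt leqnn bt => /(_ isT).
  - by move: gt; rewrite ltnNge bt'.
have cong3 : forall i j, i = j %[mod k] ->
    [/\ bnd T i = bnd T j, xx T i = xx T j & yy T i = yy T j].
  move=> i j h.
  have h' : i + k.-1 = j + k.-1 %[mod k] by rewrite -modnDml h modnDml.
  by rewrite /bnd /xx /yy (Sp_congr _ h) (Ch_congr _ h) (Ch_congr _ h').
have allx : forall j, j < k -> xx T j = xx T a0 \/ ~~ bnd T j.
  move=> j jk; case bj: (bnd T j); last by right.
  left; have [t [tk e]] := shift a0k jk; have [e1 e2 _] := cong3 _ _ e.
  by rewrite -e2 claim // e1.
case xa: (xx T a0); [left | right] => i /andP [i1 ik].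
- have ji : i = i.-1.+1 by rewrite prednK.
  have jk : i.-1 < k by rewrite -ltnS -ji.
  have hx : xx T i.-1.
    case: (allx _ jk) => [->//|nbj].
    by case/andP: (nb hk gd nbj).
  rewrite ji wv_pos // wv_next // /G inE chord_W // andbT.
  move: hx; rewrite /xx => /eqP hx.
  by change (Sp T i.-1 <-> ~~ Ch T i.-1); rewrite hx.
- have ji : i = i.-1.+1 by rewrite prednK.
  have jk : i.-1 < k by rewrite -ltnS -ji.
  have hy : yy T i.-1.
    case: (allx _ jk) => [xe|nbj]; last by case/andP: (nb hk gd nbj).
    case bj: (bnd T i.-1); last by case/andP: (nb hk gd (negbT bj)).
    by rewrite yy_bnd // xe xa.
  rewrite ji wv_prev // wv_pos //.
  have ep : pos k i.-1 = pos k (i.-1 + k.-1).+1.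
    by apply: pos_congr; rewrite predS_mod.
  rewrite [in X in _ <-> X]ep.
  change (Sp T i.-1 <-> Ch G (i.-1 + k.-1)); rewrite hC.
  by move: hy; rewrite /yy => /eqP ->.
Qed.
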